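(* A function $f:\mathbb{N}\to\mathbb{N}$ is obliviously-computable by a leaderless CRN if and only if $f$ is semilinear and superadditive (i.e. $f(x)+f(y)\le f(x+y)$ for all $x,y\in\mathbb{N}$).
   Context: A chemical reaction network (CRN) is a pair $(\mathcal{S},\mathcal{R})$ of a finite set of species and a finite set of reactions $(\vec{R},\vec{P})\in\mathbb{N}^{\mathcal{S}}\times\mathbb{N}^{\mathcal{S}}$. A configuration is $\vec{C}\in\mathbb{N}^{\mathcal{S}}$; a reaction is applicable if $\vec{R}\le\vec{C}$ and yields $\vec{C}-\vec{R}+\vec{P}$; reachability is via finite sequences of applicable reactions. A leaderless CRN computing $f:\mathbb{N}\to\mathbb{N}$ has an input species $X$ and an output species $Y$; the initial configuration for input $x$ has $x$ copies of $X$ and zero of all other species (no leader). $\vec{C}$ is stable if all configurations reachable from it have the same count of $Y$. The CRN stably computes $f$ if for every $x$ and every $\vec{C}$ reachable from the initial configuration, some stable $\vec{O}$ reachable from $\vec{C}$ has $\vec{O}(Y)=f(x)$. It is output-oblivious if $Y$ is never a reactant. $f$ is obliviously-computable by a leaderless CRN if some leaderless output-oblivious CRN stably computes it. A set $S\subseteq\mathbb{N}^d$ is semilinear if it is a finite Boolean combination of threshold sets $\{\vec{x}:\vec{a}\cdot\vec{x}\ge b\}$ and mod sets $\{\vec{x}:\vec{a}\cdot\vec{x}\equiv b\bmod c\}$ ($\vec{a}\in\mathbb{Z}^d,b\in\mathbb{Z},c\in\mathbb{N}_+$); a function is semilinear if it is a finite union of affine partial functions with disjoint semilinear domains. *)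

(* Defs.v *)
From Stdlib Require List.
From mathcomp Require Import all_boot all_order all_algebra.
Set Implicit Arguments. Unset Strict Implicit. Unset Printing Implicit Defensive.
Import Order.TTheory GRing.Theory Num.Theory.

Record crn := Crn {
  species : finType;
  reactions : seq ((species -> nat) * (species -> nat))
}.

Definition config (N : crn) := species N -> nat.

Definition step (N : crn) (C C' : config N) : Prop :=
  exists r, List.In r (reactions N) /\
    (forall s, r.1 s <= C s) /\
    (forall s, C' s = C s - r.1 s + r.2 s).

Inductive reach (N : crn) : config N -> config N -> Prop :=
| reach_refl C : reach C C
| reach_step C C' C'' : step C C' -> reach C' C'' -> reach C C''.

Definition init_config (N : crn) (X : species N) (x : nat) : config N :=
  fun s => if s == X then x else 0.

Definition stable (N : crn) (Y : species N) (C : config N) : Prop :=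
  forall C', reach C C' -> C' Y = C Y.

Definition stably_computes (N : crn) (X Y : species N) (f : nat -> nat) : Prop :=
  forall x C, reach (init_config X x) C ->
    exists O, reach C O /\ stable Y O /\ O Y = f x.

Definition output_oblivious (N : crn) (Y : species N) : Prop :=
  forall r, List.In r (reactions N) -> r.1 Y = 0.

Definition obliviously_computable (f : nat -> nat) : Prop :=
  exists (N : crn) (X Y : species N),
    output_oblivious Y /\ stably_computes X Y f.

Local Open Scope ring_scope.

Inductive semilinear_set : (nat -> Prop) -> Prop :=
| sl_thr (a b : int) : semilinear_set (fun x => b <= a * x%:Z)
| sl_mod (a b : int) (c : nat) : (0 < c)%N ->
    semilinear_set (fun x => (a * x%:Z == b %[mod c%:Z])%Z)
| sl_compl A : semilinear_set A -> semilinear_set (fun x => ~ A x)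
| sl_inter A B : semilinear_set A -> semilinear_set B ->
    semilinear_set (fun x => A x /\ B x)
| sl_union A B : semilinear_set A -> semilinear_set B ->
    semilinear_set (fun x => A x \/ B x).

Definition semilinear_fun (f : nat -> nat) : Prop :=
  exists (n : nat) (D : 'I_n -> nat -> Prop) (a b : 'I_n -> rat),
    (forall i, semilinear_set (D i)) /\
    (forall i j x, i != j -> D i x -> D j x -> False) /\
    (forall x, exists i, D i x) /\
    (forall i x, D i x -> (f x)%:R = a i * x%:R + b i).

Definition superadditive (f : nat -> nat) : Prop :=
  forall x y, (f x + f y <= f (x + y))%N.

(* Main.v *)
Require Import Defs.
From mathcomp Require Import all_boot all_order all_algebra.
From mathcomp Require Import zify ring lra.
From Stdlib Require Import FunctionalExtensionality ClassicalEpsilon Classical.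
From Stdlib Require List.
Set Implicit Arguments. Unset Strict Implicit. Unset Printing Implicit Defensive.
Import Order.TTheory GRing.Theory Num.Theory.

Section Gen.
Variable N : crn.
Implicit Types C E : config N.

Definition cadd C E : config N := fun s => C s + E s.

Lemma reach_trans C1 C2 C3 : reach C1 C2 -> reach C2 C3 -> reach C1 C3.
Proof. elim=> [//|A B D H _ IH] H2; apply: reach_step H (IH H2). Qed.

Lemma reach_ext C1 C2 E1 E2 : reach C1 C2 -> (forall s, C1 s = E1 s) ->
  (forall s, C2 s = E2 s) -> reach E1 E2.
Proof.
move=> H h1 h2.
have -> : E1 = C1 by apply: functional_extensionality => s; rewrite h1.
have -> : E2 = C2 by apply: functional_extensionality => s; rewrite h2.
done.
Qed.

Lemma step_add C C' E : step C C' -> step (cadd C E) (cadd C' E).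
Proof.
case=> r [Hr [Hle Heq]]; exists r; split=> //; split=> s; rewrite /cadd.
  by have := Hle s; lia.
by rewrite Heq; have := Hle s; lia.
Qed.

Lemma reach_add C C' E : reach C C' -> reach (cadd C E) (cadd C' E).
Proof.
elim=> [A|A B D H _ IH]; first exact: reach_refl.
exact: reach_step (step_add E H) IH.
Qed.

Lemma reach_addl C C' E : reach C C' -> reach (cadd E C) (cadd E C').
Proof.
move=> H; apply: reach_ext (reach_add E H) _ _ => s; rewrite /cadd; lia.
Qed.

Lemma reach_mono (Y : species N) C C' : output_oblivious Y -> reach C C' -> C Y <= C' Y.
Proof.
move=> Ho; elim=> [//|A B D [r [Hr [Hle Heq]]] _ IH].
by apply: leq_trans IH; rewrite Heq (Ho _ Hr); lia.
Qed.

Lemma stable_down (Y : species N) C E : stable Y (cadd C E) -> stable Y C.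
Proof.
move=> Hs C' HC; have := Hs _ (reach_add E HC); rewrite /cadd; lia.
Qed.

Lemma init_add (X : species N) a b s :
  init_config X (a + b) s = cadd (init_config X a) (init_config X b) s.
Proof. by rewrite /cadd /init_config; case: (s == X). Qed.

End Gen.

Definition sincr (t : nat -> nat) := forall k, t k < t k.+1.

Lemma sincr_lt t a b : sincr t -> a < b -> t a < t b.
Proof.
move=> Ht; elim: b => // b IH; rewrite ltnS leq_eqVlt => /orP[/eqP->|/IH h]//.
exact: leq_trans h (ltnW (Ht b)).
Qed.

Lemma sincr_ge t k : sincr t -> k <= t k.
Proof. move=> Ht; elim: k => // k IH; have := Ht k; lia. Qed.

Lemma choice_fun (A B : Type) (P : A -> B -> Prop) :
  (forall a, exists b, P a b) -> exists g : A -> B, forall a, P a (g a).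
Proof.
move=> H; exists (fun a => proj1_sig (constructive_indefinite_description _ (H a))).
by move=> a; case: constructive_indefinite_description.
Qed.

Lemma sub1 (g : nat -> nat) : exists t, sincr t /\
  ((forall k, g (t k) = g (t 0)) \/ (forall k, g (t k) < g (t k.+1))).
Proof.
case: (classic (exists c, forall M, exists n, M <= n /\ g n = c)) => [[c Hc]|Hn].
  have [h Hh] := choice_fun Hc.
  exists (fun k => iter k (fun m => h m.+1) (h 0)); split.
    by move=> k /=; have [] := Hh (iter k (fun m => h m.+1) (h 0)).+1.
  left=> k; case: k => [//|k] /=.
  have [_ ->] := Hh (iter k (fun m => h m.+1) (h 0)).+1.
  by have [_ ->] := Hh 0.
have Hb : forall B, exists M, forall n, M <= n -> B <= g n.
  elim=> [|B [M1 HM1]]; first by exists 0.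
  have : ~ (forall M, exists n, M <= n /\ g n = B) by move=> H; apply: Hn; exists B.
  move/not_all_ex_not => [M2 HM2].
  exists (maxn M1 M2) => n Hn'.
  have h1 := HM1 n (leq_trans (leq_maxl _ _) Hn').
  case: (ltngtP B (g n)) => // e.
    by lia.
  by exfalso; apply: HM2; exists n; split=> //; exact: leq_trans (leq_maxr _ _) Hn'.
have [h Hh] := choice_fun Hb.
exists (fun k => iter k (fun m => maxn m.+1 (h (g m).+1)) 0); split.
  by move=> k /=; apply: leq_trans (leq_maxl _ _).
right=> k /=; apply: Hh; exact: leq_maxr.
Qed.

Lemma subseq_fin (S : finType) (v : nat -> S -> nat) : exists t, sincr t /\
  forall s, (forall k, v (t k) s = v (t 0) s) \/ (forall k, v (t k) s < v (t k.+1) s).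
Proof.
suff : forall L : seq S, exists t, sincr t /\ forall s, s \in L ->
  (forall k, v (t k) s = v (t 0) s) \/ (forall k, v (t k) s < v (t k.+1) s).
  by case/(_ (enum S)) => t [Ht H]; exists t; split=> // s; apply: H; rewrite mem_enum.
elim=> [|s L [t [Ht H]]]; first by exists id; split.
have [u [Hu Hc]] := sub1 (fun k => v (t k) s).
exists (fun k => t (u k)); split.
  by move=> k; apply: sincr_lt.
move=> s'; rewrite inE => /orP[/eqP->|Hs']; first by [].
case: (H s' Hs') => [Hk|Hk]; [left=> k; rewrite !Hk // | right=> k].
have Hm : forall a b, a < b -> v (t a) s' < v (t b) s'.
  move=> a; elim=> // b IH; rewrite ltnS leq_eqVlt => /orP[/eqP->|/IH h]//.
  exact: ltn_trans h (Hk b).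
exact: Hm.
Qed.

Lemma noninc_stab (u : nat -> nat) : (forall k, u k.+1 <= u k) ->
  exists K, forall k, K <= k -> u k = u K.
Proof.
move: {2}(u 0) (leqnn (u 0)) => b; elim: b u => [|b IH] u Hb Hu.
  have H0 : forall k, u k = 0 by elim=> [|k IHk]; [lia | have := Hu k; lia].
  by exists 0 => k _; rewrite !H0.
case: (classic (forall k, u k = u 0)) => [H|/not_all_ex_not [k Hk]].
  by exists 0 => k _; rewrite H.
have Hm : forall a b, a <= b -> u b <= u a.
  move=> a; elim=> [|c IHc]; first by rewrite leqn0 => /eqP->.
  rewrite leq_eqVlt => /orP[/eqP<-//|h]; exact: leq_trans (Hu c) (IHc h).
have Hk' : u k < u 0 by have := Hm 0 k (leq0n _); lia.
have [K HK] : exists K, forall j, K <= j -> u (k + j) = u (k + K).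
  apply: (IH (fun j => u (k + j))); first by rewrite addn0; lia.
  by move=> j; rewrite addnS; apply: Hu.
exists (k + K) => j Hj; have := HK (j - k); rewrite subnKC; last by lia.
by move=> ->; lia.
Qed.

Lemma noninc_stab_fam (u : nat -> nat -> nat) d : (forall r k, u r k.+1 <= u r k) ->
  exists K, forall r k, r < d -> K <= k -> u r k = u r K.
Proof.
move=> Hu; elim: d => [|d [K1 H1]]; first by exists 0.
have [K2 H2] := noninc_stab (Hu d).
exists (maxn K1 K2) => r k Hr Hk.
rewrite ltnS leq_eqVlt in Hr; case/orP: Hr => [/eqP->|Hr].
  by rewrite H2 ?[in RHS]H2 //; lia.
by rewrite H1 ?[in RHS]H1 //; lia.
Qed.

Lemma sa_mono f a b : superadditive f -> a <= b -> f a <= f b.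
Proof. move=> Hs Hab; have := Hs a (b - a); rewrite subnKC //; lia. Qed.

Lemma sa_mul f j n : superadditive f -> j * f n <= f (j * n).
Proof.
move=> Hs; elim: j => [|j IH]; first by rewrite !mul0n.
by rewrite !mulSn; apply: leq_trans (Hs _ _); rewrite leq_add2l.
Qed.

Lemma arith_ep f d x q : superadditive f -> 0 < d ->
  (forall k, f (x + k * d) = f x + k * q) ->
  (forall m, x <= m -> f m + q <= f (m + d)) ->
  exists N, forall n, N <= n -> f (n + d) = f n + q.
Proof.
move=> Hs Hd HA HB.
have Hbound : forall n, d * f n <= n * q.
  move=> n; rewrite leqNgt; apply/negP => Hlt.
  set t := (f x).+1.
  have h1 := HA (n * t).
  have h2 : f (t * d * n) <= f (x + n * t * d) by apply: sa_mono => //; lia.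
  have h3 := sa_mul (t * d) n Hs.
  have : t * d * f n <= f x + n * t * q by rewrite -h1; exact: leq_trans h3 h2.
  have : t * (n * q).+1 <= t * (d * f n) by rewrite leq_mul2l Hlt orbT.
  rewrite mulnS /t; nia.
pose u r k := (x + r + k * d) * q - d * f (x + r + k * d).
have Hu : forall r k, u r k.+1 <= u r k.
  move=> r k; rewrite /u.
  have e : x + r + k.+1 * d = (x + r + k * d) + d by rewrite mulSn; lia.
  rewrite e; set m := x + r + k * d.
  have hB : f m + q <= f (m + d) by apply: HB; rewrite /m; lia.
  have b1 := Hbound m; have b2 := Hbound (m + d).
  nia.
have [K HK] := @noninc_stab_fam u d Hu.
exists (x + K * d) => n Hn.
set r := (n - x) %% d; set k := (n - x) %/ d.
have Hr : r < d by rewrite ltn_pmod.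
have Hk : K <= k by rewrite /k leq_divRL //; lia.
have hn : n = x + r + k * d by rewrite /r /k (divn_eq (n - x) d); lia.
have := HK r k.+1 Hr (leqW Hk); rewrite -(HK r k Hr Hk) /u.
have e : x + r + k.+1 * d = n + d by rewrite mulSn; lia.
rewrite e -hn.
have hB : f n + q <= f (n + d) by apply: HB; lia.
have b1 := Hbound n; have b2 := Hbound (n + d).
move=> E.
have : d * f (n + d) = d * (f n + q) by nia.
by move/eqP; rewrite eqn_pmul2l // => /eqP.
Qed.

Ltac pw := let s := fresh "s" in move=> s; rewrite /cadd /init_config;
  first [case: eqP => _; nia | nia].

Section Fwd.
Variables (N : crn) (X Y : species N) (f : nat -> nat).
Hypothesis Ho : output_oblivious Y.
Hypothesis Hc : stably_computes X Y f.
Local Notation I := (init_config X).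

Lemma stable_val x O : reach (I x) O -> stable Y O -> O Y = f x.
Proof.
move=> HO Hs; have [O' [H1 [_ H3]]] := Hc HO.
by rewrite -(Hs _ H1).
Qed.

Lemma comp_sa : superadditive f.
Proof.
move=> a b.
have [Oa [Ha [_ Ea]]] := Hc (reach_refl (I a)).
have [Ob [Hb [_ Eb]]] := Hc (reach_refl (I b)).
have H : reach (I (a + b)) (cadd Oa Ob).
  have H1 : reach (I (a + b)) (cadd Oa (I b)).
    by apply: reach_ext (reach_add (I b) Ha) _ (fun s => erefl) => s; rewrite init_add.
  exact: reach_trans H1 (reach_addl Oa Hb).
have [O [HO [_ EO]]] := Hc H.
by rewrite -Ea -Eb -EO; apply: (reach_mono Ho HO).
Qed.

Lemma comp_ep : exists N0 P q, 0 < P /\ forall n, N0 <= n -> f (n + P) = f n + q.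
Proof.
have Hex : forall C : config N, exists O, reach (cadd C (I 1)) O /\
    ((exists n, reach (I n) C) -> stable Y O).
  move=> C; case: (classic (exists n, reach (I n) C)) => [[n Hn]|Hn].
    have Hr : reach (I n.+1) (cadd C (I 1)).
      apply: reach_ext (reach_add (I 1) Hn) _ (fun s => erefl).
      by move=> s; rewrite -init_add addn1.
    have [O [HO [HsO _]]] := Hc Hr.
    by exists O.
  by exists (cadd C (I 1)); split=> //; exact: reach_refl.
have [g Hg] := choice_fun Hex.
have [O0 [HO0 [HsO0 _]]] := Hc (reach_refl (I 0)).
pose Os n := iter n g O0.
have HOs : forall n, reach (I n) (Os n) /\ stable Y (Os n).
  elim=> [|n [IH1 IH2]]; first by split.
  have Hr : reach (I n.+1) (cadd (Os n) (I 1)).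
    apply: reach_ext (reach_add (I 1) IH1) _ (fun s => erefl).
    by move=> s; rewrite -init_add addn1.
  have [H1 H2] := Hg (Os n).
  split; first exact: reach_trans Hr H1.
  by apply: H2; exists n.
have Hchain : forall a d, reach (cadd (Os a) (I d)) (Os (a + d)).
  move=> a; elim=> [|d IH].
    rewrite addn0; apply: reach_ext (reach_refl (Os a)) _ _; pw.
  have [H1 _] := Hg (Os (a + d)).
  rewrite addnS; apply: reach_trans _ H1.
  by apply: reach_ext (reach_add (I 1) IH) _ (fun s => erefl); pw.
have [t [Ht Hco]] := subseq_fin Os.
set x := t 0; set x' := t 1; set d := x' - x.
have Hxx : x < x' by apply: Ht.
pose D s := Os x' s - Os x s.
have Hle : forall s, Os x s <= Os x' s.
  by move=> s; case: (Hco s) => H; [rewrite /x' H | exact: ltnW (H 0)].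
have HD : reach (cadd (Os x) (I d)) (cadd (Os x) D).
  apply: reach_ext (Hchain x d) (fun s => erefl) _ => s.
  by rewrite /cadd /D /d subnKC ?(ltnW Hxx) //; have := Hle s; lia.
have Hpump : forall k, reach (cadd (Os x) (I (k * d))) (fun s => Os x s + k * D s).
  elim=> [|k IH]; first by apply: reach_ext (reach_refl (Os x)) _ _; pw.
  have H1 : reach (cadd (Os x) (I (k.+1 * d))) (cadd (cadd (Os x) D) (I (k * d))).
    by apply: reach_ext (reach_add (I (k * d)) HD) _ (fun s => erefl); pw.
  apply: reach_trans H1 _.
  by apply: reach_ext (reach_add D IH) _ _; pw.
have Hst : forall k, stable Y (fun s => Os x s + k * D s).
  move=> k; set m := k * \sum_s D s.
  have Hbig : forall s, Os x s + k * D s <= Os (t m) s.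
    move=> s; case: (Hco s) => H.
      by rewrite /D /x' /x !H subnn muln0 addn0.
    have Hj : forall j, Os (t 0) s + j <= Os (t j) s.
      elim=> [|j IHj]; first by rewrite addn0.
      by have := H j; lia.
    apply: leq_trans (Hj m); rewrite leq_add2l /m leq_mul2l.
    by rewrite (bigD1 s) //= leq_addr orbT.
  apply: (@stable_down _ _ _ (fun s => Os (t m) s - (Os x s + k * D s))).
  have -> : cadd (fun s => Os x s + k * D s) (fun s => Os (t m) s - (Os x s + k * D s)) = Os (t m).
    by apply: functional_extensionality => s; rewrite /cadd subnKC.
  by case: (HOs (t m)).
set q := D Y.
have HA : forall k, f (x + k * d) = f x + k * q.
  move=> k.
  have Hr : reach (I (x + k * d)) (fun s => Os x s + k * D s).
    apply: reach_trans _ (Hpump k).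
    have [H1 _] := HOs x.
    by apply: reach_ext (reach_add (I (k * d)) H1) _ (fun s => erefl) => s; rewrite init_add.
  have [H1 H2] := HOs x.
  by rewrite -(stable_val Hr (Hst k)) -(stable_val H1 H2).
have HB : forall m, x <= m -> f m + q <= f (m + d).
  move=> m Hm.
  have [H1 _] := HOs x.
  have Hr1 : reach (I m) (cadd (Os x) (I (m - x))).
    apply: reach_ext (reach_add (I (m - x)) H1) _ (fun s => erefl).
    by move=> s; rewrite -init_add subnKC.
  have [Q [HQ [_ EQ]]] := Hc Hr1.
  have Hr2 : reach (I (m + d)) (cadd (cadd (Os x) D) (I (m - x))).
    have H1' : reach (I (m + d)) (cadd (cadd (Os x) (I d)) (I (m - x))).
      apply: reach_ext (reach_add (I (m - x)) (reach_add (I d) H1)) _ (fun s => erefl).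
      by move=> s; rewrite /cadd /init_config; case: (s == X) => //=; lia.
    exact: reach_trans H1' (reach_add (I (m - x)) HD).
  have Hr3 : reach (I (m + d)) (cadd Q D).
    apply: reach_trans Hr2 _.
    by apply: reach_ext (reach_add D HQ) _ (fun s => erefl); pw.
  have [O' [HO' [_ EO']]] := Hc Hr3.
  by rewrite -EQ -EO'; apply: (reach_mono Ho HO').
have Hd : 0 < d by rewrite subn_gt0.
have [N0 HN0] := arith_ep comp_sa Hd HA HB.
by exists N0, d, q.
Qed.
End Fwd.

Definition EP (f : nat -> nat) := exists N P q, 0 < P /\ forall n, N <= n -> f (n + P) = f n + q.

Lemma EP_iter f N P q : (forall n, N <= n -> f (n + P) = f n + q) ->
  forall k n, N <= n -> f (n + k * P) = f n + k * q.
Proof.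
move=> H; elim=> [|k IH] n Hn; first by rewrite !mul0n !addn0.
rewrite mulSn addnA IH; last by lia.
by rewrite H // mulSn; lia.
Qed.

Lemma modL1 N P x i : 0 < P -> N <= x -> N <= i < N + P -> x = i %[mod P] ->
  (x - N) %% P = i - N.
Proof.
move=> HP Hx /andP[Hi1 Hi2] E.
have E2 : N + (x - N) = N + (i - N) %[mod P] by rewrite !subnKC.
move/eqP: E2; rewrite eqn_modDl => /eqP->.
by rewrite modn_small //; lia.
Qed.

Lemma EP_semilinear f : EP f -> semilinear_fun f.
Proof.
move=> [N [P [q [HP H]]]].
have Hi := EP_iter H.
pose D (i : 'I_(N + P)) : nat -> Prop :=
  if i < N then (fun x => (i%:Z <= 1 * x%:Z)%R /\ (- i%:Z <= -1 * x%:Z)%R)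
  else (fun x => (N%:Z <= 1 * x%:Z)%R /\ (1 * x%:Z == i%:Z %[mod P%:Z])%Z).
have HD : forall (i : 'I_(N + P)) x, D i x <->
    if i < N then x = i else N <= x /\ x = i %[mod P].
  move=> i x; rewrite /D; case: ifP => _.
    by rewrite !mul1r !mulN1r lerN2 !lez_nat; split; [case=> *; apply/eqP; rewrite eqn_leq; apply/andP|move=>->].
  rewrite !mul1r lez_nat /=; split; case=> h1 h2; split=> //.
    by move: h2; rewrite /= !modz_nat eqz_nat => /eqP.
  by rewrite /= !modz_nat eqz_nat h2.
pose a (i : 'I_(N + P)) : rat := if i < N then 0%R else (q%:R / P%:R)%R.
pose b (i : 'I_(N + P)) : rat := if i < N then ((f i)%:R)%R else ((f i)%:R - q%:R / P%:R * i%:R)%R.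
exists (N + P), D, a, b; split; [|split; [|split]].
- move=> i; rewrite /D; case: ifP => _.
    exact: (sl_inter (sl_thr 1 i%:Z) (sl_thr (-1) (- i%:Z))).
  exact: (sl_inter (sl_thr 1 N%:Z) (sl_mod 1 i%:Z HP)).
- move=> i j x Hij /HD Di /HD Dj; move: Di Dj.
  case: ifP => hi; case: ifP => hj.
  + by move=> -> /val_inj e; rewrite e eqxx in Hij.
  + by move=> -> []; lia.
  + by move=> [] ? ? ?; lia.
  move=> [h1 h2] [h3 h4].
  have e1 := modL1 HP h1 (i := i) ltac:(apply/andP; split; [lia|exact: ltn_ord]) h2.
  have e2 := modL1 HP h1 (i := j) ltac:(apply/andP; split; [lia|exact: ltn_ord]) h4.
  have : nat_of_ord i = nat_of_ord j by move: e1 e2 hi hj; generalize ((x - N) %% P) => r; lia.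
  by move/ord_inj => e; rewrite e eqxx in Hij.
- move=> x; case: (ltnP x N) => hx.
    exists (Ordinal (ltn_addr P hx)); apply/HD => /=; by rewrite hx.
  have hlt : N + (x - N) %% P < N + P by rewrite ltn_add2l ltn_pmod.
  exists (Ordinal hlt); apply/HD => /=.
  rewrite ltnNge leq_addr /=; split=> //.
  by rewrite modnDmr subnKC.
- move=> i x /HD; rewrite /a /b; case: ifP => hi.
    by move=> ->; rewrite mul0r add0r.
  move=> [h1 h2].
  have e1 := modL1 HP h1 (i := i) ltac:(apply/andP; split; [lia|exact: ltn_ord]) h2.
  have hx : x = i + (x - N) %/ P * P.
    by have := divn_eq (x - N) P; rewrite e1; move: hi; generalize ((x - N) %/ P) => k; lia.
  rewrite hx Hi; last by lia.
  rewrite natrD !natrM.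
  have hP : (P%:R : rat) != 0%R by rewrite pnatr_eq0 -lt0n.
  by field.
Qed.

Definition EPS (A : nat -> Prop) N P := 0 < P /\ forall n, N <= n -> (A n <-> A (n + P)).

Lemma EPS_iter A N P : EPS A N P -> forall k n, N <= n -> (A n <-> A (n + k * P)).
Proof.
move=> [HP H]; elim=> [|k IH] n Hn; first by rewrite mul0n addn0.
rewrite mulSn addnA -IH; last by lia.
exact: H.
Qed.

Lemma EPS_mono A N P N' k : EPS A N P -> N <= N' -> 0 < k -> EPS A N' (P * k).
Proof.
move=> HA hN hk; split; first by case: HA => HP _; rewrite muln_gt0 HP.
by move=> n hn; rewrite mulnC; apply: (EPS_iter HA); lia.
Qed.

Section Thr.
Local Open Scope ring_scope.
Lemma thr_ep (a b : int) : exists N P, EPS (fun x : nat => b <= a * x%:Z) N P.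
Proof.
exists (`|b|%N + 1)%N, 1%N; split=> // n hn.
have hb : `|b| < n%:Z.
  by rewrite -abszE ltz_nat; lia.
have hb1 : b < n%:Z by apply: le_lt_trans hb; exact: ler_norm.
have hb2 : - n%:Z < b by rewrite ltrNl; apply: le_lt_trans hb; rewrite -normrN; exact: ler_norm.
case: (ltrgt0P a) => ha.
+ have h1 : n%:Z <= a * n%:Z by rewrite -{1}(mul1r n%:Z) ler_wpM2r // ?ler0n //; lia.
  have h2 : (n + 1)%:Z <= a * (n + 1)%:Z by rewrite -{1}(mul1r (n + 1)%:Z) ler_wpM2r // ?ler0n //; lia.
  split=> _; [apply: le_trans h2 | apply: le_trans h1]; rewrite ?PoszD; lia.
+ have h1 : a * n%:Z <= - n%:Z by rewrite -mulN1r ler_wpM2r // ?ler0n //; lia.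
  have h2 : a * (n + 1)%:Z <= - (n + 1)%:Z by rewrite -mulN1r ler_wpM2r // ?ler0n //; lia.
  split=> h; exfalso; [move: (le_trans h h1) | move: (le_trans h h2)]; rewrite ?PoszD; lia.
+ by rewrite ha !mul0r.
Qed.
End Thr.

Lemma sl_ep A : semilinear_set A -> exists N P, EPS A N P.
Proof.
elim=> {A}.
- move=> a b; exact: thr_ep.
- move=> a b c hc; exists 0, c; split=> // n _.
  by rewrite PoszD mulrDr addrC modzMDl.
- move=> A _ [N [P [HP H]]]; exists N, P; split=> // n hn.
  by have := H n hn; tauto.
- move=> A B _ [N1 [P1 H1]] _ [N2 [P2 H2]].
  have hP1 := H1.1; have hP2 := H2.1.
  have [_ G1] := EPS_mono (N' := maxn N1 N2) H1 (leq_maxl _ _) hP2.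
  have [_ G2] := EPS_mono (N' := maxn N1 N2) H2 (leq_maxr _ _) hP1.
  exists (maxn N1 N2), (P1 * P2); split; first by rewrite muln_gt0 hP1.
  move=> n hn; rewrite -G1 // (mulnC P1) -G2 //; tauto.
- move=> A B _ [N1 [P1 H1]] _ [N2 [P2 H2]].
  have hP1 := H1.1; have hP2 := H2.1.
  have [_ G1] := EPS_mono (N' := maxn N1 N2) H1 (leq_maxl _ _) hP2.
  have [_ G2] := EPS_mono (N' := maxn N1 N2) H2 (leq_maxr _ _) hP1.
  exists (maxn N1 N2), (P1 * P2); split; first by rewrite muln_gt0 hP1.
  move=> n hn; rewrite -G1 // (mulnC P1) -G2 //; tauto.
Qed.

Lemma W_ep f N P : superadditive f -> 0 < P ->
  (forall n, N <= n -> f (n + P + P) + f n = f (n + P) * 2) -> EP f.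
Proof.
move=> Hs HP HW.
have Hm : forall n, f n <= f (n + P) by move=> n; apply: sa_mono => //; lia.
pose Dl n := f (n + P) - f n.
have HD1 : forall n, N <= n -> Dl (n + P) = Dl n.
  by move=> n hn; rewrite /Dl; have := HW n hn; have := Hm n; have := Hm (n + P); lia.
have HDj : forall j n, N <= n -> Dl (n + j * P) = Dl n.
  elim=> [|j IH] n hn; first by rewrite mul0n addn0.
  by rewrite mulSn addnA IH ?HD1 //; lia.
have Hit : forall k n, N <= n -> f (n + k * P) = f n + k * Dl n.
  elim=> [|k IH] n hn; first by rewrite !mul0n !addn0.
  have e : n + k.+1 * P = (n + k * P) + P by rewrite mulSn; lia.
  have h1 := Hm (n + k * P).
  have h2 : f (n + k * P + P) = f (n + k * P) + Dl (n + k * P) by rewrite /Dl; lia.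
  by rewrite e h2 HDj // IH // mulSn; lia.
have Hcl : forall n n', N <= n -> N <= n' -> n %% P = n' %% P -> Dl n = Dl n'.
  move=> n n' hn hn' E.
  wlog le : n n' hn hn' E / n <= n'.
    move=> H; case: (leqP n n') => h; first exact: H.
    by symmetry; apply: H => //; lia.
  have : P %| n' - n by rewrite -eqn_mod_dvd // E.
  move/divnK => e.
  have -> : n' = n + (n' - n) %/ P * P by rewrite e; lia.
  by rewrite HDj.
set M := N * P.
have hM : N <= M by rewrite /M; rewrite -{1}(muln1 N) leq_mul2l HP orbT.
have hMm : M %% P = 0 by rewrite /M modnMl.
have Hlow : forall n, N <= n -> Dl M <= Dl n.
  move=> n hn; rewrite leqNgt; apply/negP => hlt.
  set k := (f (n + M)).+1.
  have e1 : f (n + M + k * P) = f (n + M) + k * Dl n.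
    rewrite Hit; last by lia.
    by rewrite (@Hcl (n + M) n) //; [lia | rewrite -modnDm hMm addn0 modn_mod].
  have e2 := Hs n (M + k * P).
  rewrite addnA e1 (Hit k M hM) in e2.
  have : k * (Dl n).+1 <= k * Dl M by rewrite leq_mul2l hlt orbT.
  rewrite mulnS /k in e2 *; nia.
have Hup : forall n, N <= n -> Dl n <= Dl M.
  move=> n hn; rewrite leqNgt; apply/negP => hlt.
  have hPn : N <= P * n by rewrite -{1}(mul1n N); apply: leq_mul => //; lia.
  set k := (f (P * n)).+1.
  have e1 : f (P * n + (P * k) * P) = f (P * n) + (P * k) * Dl M.
    rewrite Hit //; congr (_ + _ * _); apply: Hcl => //.
    by rewrite hMm mulnC modnMl.
  have e2 := sa_mul P (n + k * P) Hs.
  have e3 : P * (n + k * P) = P * n + P * k * P by rewrite mulnDr mulnA.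
  rewrite e3 e1 Hit // in e2.
  have : P * k * (Dl M).+1 <= P * k * Dl n by rewrite leq_mul2l hlt orbT.
  rewrite mulnS.
  have : k <= P * k by rewrite -{1}(mul1n k) leq_mul2r HP orbT.
  rewrite /k in e2 *; nia.
exists N, P, (Dl M); split=> // n hn.
have := Hm n; rewrite -(@anti_leq (Dl n) (Dl M)) ?Hlow ?Hup //; rewrite /Dl; lia.
Qed.

Lemma sf_ep f : semilinear_fun f -> superadditive f -> EP f.
Proof.
move=> [n [D [a [b [HD [Hdisj [Hcov Hval]]]]]]] Hs.
have : forall i, exists NP : nat * nat, EPS (D i) NP.1 NP.2.
  by move=> i; have [N0 [P0 H]] := sl_ep (HD i); exists (N0, P0).
case/fin_all_exists => NP HNP.
set N := \max_i (NP i).1; set P := \prod_i (NP i).2.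
have HP : 0 < P by rewrite /P prodn_gt0 // => i; case: (HNP i).
have HE : forall i, EPS (D i) N P.
  move=> i; rewrite /P (bigD1 i) //=.
  apply: EPS_mono (HNP i) _ _; first by rewrite /N; exact: (leq_bigmax i).
  by rewrite prodn_gt0 // => j; case: (HNP j).
apply: (@W_ep f N P) => // m hm.
have [i Hi] := Hcov m.
have [_ H] := HE i.
have Hi1 : D i (m + P) by rewrite -H.
have Hi2 : D i (m + P + P) by rewrite -H //; lia.
apply/eqP; rewrite -(eqr_nat rat) !natrD natrM (Hval _ _ Hi) (Hval _ _ Hi1) (Hval _ _ Hi2).
by rewrite !natrD; apply/eqP; ring.
Qed.

Lemma mem_In (T : eqType) (x : T) (s : seq T) : x \in s -> List.In x s.
Proof. elim: s => //= a s IH; rewrite inE => /orP[/eqP->|/IH]; auto. Qed.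

Section Constr.
Variables (f : nat -> nat) (N0 P q : nat).
Hypothesis HP : 0 < P.
Hypothesis Hs : superadditive f.
Hypothesis HEP : forall n, N0 <= n -> f (n + P) = f n + q.

Definition NN := N0.+2.
Definition K := NN + P.
Definition Sp : finType := option (option 'I_K).
Definition sX : Sp := None.
Definition sY : Sp := Some None.
Definition sA (i : 'I_K) : Sp := Some (Some i).

Definition red n := if n < K then n else NN + (n - NN) %% P.
Lemma red_lt n : red n < K.
Proof. rewrite /red; case: ifP => // _; rewrite /K ltn_add2l ltn_pmod //. Qed.
Definition kidx (i j : 'I_K) : 'I_K := Ordinal (red_lt (i + j)).
Lemma lt1K : 1 < K. Proof. rewrite /K /NN; lia. Qed.
Definition i1 : 'I_K := Ordinal lt1K.

Definition cfg := Sp -> nat.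
Definition rX : cfg * cfg :=
  (fun s => nat_of_bool (s == sX), fun s => nat_of_bool (s == sA i1) + f 1 * nat_of_bool (s == sY)).
Definition rM (i j : 'I_K) : cfg * cfg :=
  (fun s => nat_of_bool (s == sA i) + nat_of_bool (s == sA j),
   fun s => nat_of_bool (s == sA (kidx i j)) + (f (i + j) - f i - f j) * nat_of_bool (s == sY)).
Definition reacts : seq (cfg * cfg) :=
  rX :: List.flat_map (fun i => List.map (fun j => rM i j) (enum 'I_K)) (enum 'I_K).
Definition Net : crn := Crn reacts.

Definition W (a b : nat) (w : 'I_K -> nat) (C : cfg) :=
  C sX * a + C sY * b + \sum_(i < K) C (sA i) * w i.

Lemma W_lin a b w (C C' r1 r2 : cfg) : (forall s, C' s + r1 s = C s + r2 s) ->
  W a b w C' + W a b w r1 = W a b w C + W a b w r2.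
Proof.
move=> H; rewrite /W.
have e : \sum_(i < K) C' (sA i) * w i + \sum_(i < K) r1 (sA i) * w i =
         \sum_(i < K) C (sA i) * w i + \sum_(i < K) r2 (sA i) * w i.
  by rewrite -!big_split; apply: eq_bigr => i _; have := H (sA i); rewrite /=; nia.
have hX := H sX; have hY := H sY.
have eX : C' sX * a + r1 sX * a = C sX * a + r2 sX * a by rewrite -!mulnDl hX.
have eY : C' sY * b + r1 sY * b = C sY * b + r2 sY * b by rewrite -!mulnDl hY.
lia.
Qed.

Lemma W_le a b w (C C' : cfg) : (forall s, C s <= C' s) -> W a b w C <= W a b w C'.
Proof.
move=> H; rewrite /W; apply: leq_add; first apply: leq_add.
- exact: leq_mul.
- exact: leq_mul.
by apply: leq_sum => i _; apply: leq_mul.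
Qed.

Lemma eqAA i j : (sA i == sA j) = (i == j).
Proof. by apply/eqP/eqP => [[]|->]. Qed.
Lemma eqAX i : (sA i == sX) = false. Proof. by apply/eqP. Qed.
Lemma eqAY i : (sA i == sY) = false. Proof. by apply/eqP. Qed.
Lemma eqXA i : (sX == sA i) = false. Proof. by apply/eqP. Qed.
Lemma eqYA i : (sY == sA i) = false. Proof. by apply/eqP. Qed.
Lemma eqXY : (sX == sY) = false. Proof. by apply/eqP. Qed.
Lemma eqYX : (sY == sX) = false. Proof. by apply/eqP. Qed.
Lemma eqXX : (sX == sX) = true. Proof. by apply/eqP. Qed.
Lemma eqYY : (sY == sY) = true. Proof. by apply/eqP. Qed.
Definition eqsimp := (eqAA, eqAX, eqAY, eqXA, eqYA, eqXY, eqYX, eqXX, eqYY).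

Lemma sum_ind (w : 'I_K -> nat) j :
  \sum_(i < K) nat_of_bool (sA i == sA j) * w i = w j.
Proof.
rewrite (bigD1 j) //= eqAA eqxx mul1n big1 ?addn0 // => i /negbTE.
by rewrite eqAA => ->.
Qed.

Lemma sum0 (w : 'I_K -> nat) : \sum_(i < K) 0 * w i = 0.
Proof. by rewrite big1. Qed.

Lemma W_rX1 a b w : W a b w rX.1 = a.
Proof.
by rewrite /W /= sum0; lia.
Qed.

Lemma W_rX2 a b w : W a b w rX.2 = w i1 + f 1 * b.
Proof.
rewrite /W /= ?eqsimp /=.
under eq_bigr => l _ do rewrite muln0 addn0.
by rewrite sum_ind; lia.
Qed.

Lemma sum_ind2 (w : 'I_K -> nat) i j :
  \sum_(l < K) (nat_of_bool (sA l == sA i) + nat_of_bool (sA l == sA j)) * w l = w i + w j.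
Proof.
under eq_bigr => l _ do rewrite mulnDl.
by rewrite big_split /= !sum_ind.
Qed.

Lemma W_rM1 a b w i j : W a b w (rM i j).1 = w i + w j.
Proof. by rewrite /W /= ?eqsimp /= sum_ind2. Qed.

Lemma W_rM2 a b w i j : W a b w (rM i j).2 = w (kidx i j) + (f (i + j) - f i - f j) * b.
Proof.
rewrite /W /= ?eqsimp /=.
under eq_bigr => l _ do rewrite muln0 addn0.
by rewrite sum_ind; lia.
Qed.

Lemma NN_N0 : N0 <= NN. Proof. rewrite /NN; lia. Qed.
Lemma EPi k n : NN <= n -> f (n + k * P) = f n + k * q.
Proof. move=> h; apply: (EP_iter HEP); have := NN_N0; lia. Qed.

Lemma red_dec n : exists t, n = red n + t * P /\ (t = 0 \/ NN <= red n).
Proof.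
rewrite /red; case: ifP => h; first by exists 0; split; [rewrite mul0n addn0 | left].
exists ((n - NN) %/ P); split; last by right; lia.
have := divn_eq (n - NN) P; move: h; rewrite /K.
generalize ((n - NN) %/ P) ((n - NN) %% P) => a c; lia.
Qed.

Lemma red_ge n : NN <= n -> NN <= red n.
Proof. rewrite /red; case: ifP => //; lia. Qed.

Lemma keyEq n : P * f n + q * red n = q * n + P * f (red n).
Proof.
have [t [e [ht|h]]] := red_dec n.
  by move: e; rewrite ht mul0n addn0 => e; rewrite -e addnC.
rewrite {1 3}e EPi //; nia.
Qed.

Definition W1 := W q P (fun i => q * i).
Definition W2 := W 0 0 (fun i => P * f i).
Definition S := W 1 0 (fun i => nat_of_ord i).
Definition B := W 0 0 (fun _ => 1).

Definition Inv x (C : cfg) := W1 C = W2 C + q * x /\ exists t, x = S C + t * P /\ (t = 0 \/ exists i : 'I_K, NN <= i /\ 0 < C (sA i)).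

Lemma In_reacts r : List.In r reacts -> r = rX \/ exists i j, r = rM i j.
Proof.
case=> [<-|]; first by left.
case/List.in_flat_map => i [_ /List.in_map_iff [j [<- _]]].
by right; exists i, j.
Qed.

Lemma rM_In i j : List.In (rM i j) reacts.
Proof.
right; apply/List.in_flat_map; exists i; split; first by apply: mem_In; rewrite mem_enum.
by apply/List.in_map_iff; exists j; split=> //; apply: mem_In; rewrite mem_enum.
Qed.

Lemma step_inv x (C C' : config Net) : step C C' -> Inv x C -> Inv x C'.
Proof.
case=> r [Hr [Hle Heq]] [I1 [t [I2 I3]]].
have Hlin : forall s, C' s + r.1 s = C s + r.2 s.
  by move=> s; rewrite Heq; have := Hle s; lia.
have Hge : forall s, r.2 s <= C' s by move=> s; have := Hle s; have := Hlin s; lia.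
have Hge0 : forall s, r.1 s = 0 -> C s <= C' s by move=> s h; have := Hlin s; lia.
have w1 := W_lin q P (fun i => q * i) Hlin.
have w2 := W_lin 0 0 (fun i => P * f i) Hlin.
have w3 := W_lin 1 0 (fun i => nat_of_ord i) Hlin.
case: (In_reacts Hr) => [Er|[i [j Er]]]; subst r.
  rewrite W_rX1 W_rX2 in w1; rewrite W_rX1 W_rX2 in w2; rewrite W_rX1 W_rX2 in w3.
  split; first by rewrite /W1 /W2 /= in I1 w1 w2 *; nia.
  exists t; split; first by rewrite /S /= in I2 w3 *; nia.
  case: I3 => [->|[l [hl hC]]]; [by left | right; exists l; split=> //].
  by apply: leq_trans hC (Hge0 _ _); rewrite /= ?eqsimp.
rewrite W_rM1 W_rM2 in w1; rewrite W_rM1 W_rM2 in w2; rewrite W_rM1 W_rM2 in w3.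
have hsa : f i + f j <= f (i + j) by apply: Hs.
have hk := keyEq (i + j).
have [t' [et' Ht']] := red_dec (i + j).
split.
  rewrite /W1 /W2 in I1 *; rewrite /kidx /= in w1 w2; nia.
exists (t + t'); split; first by rewrite /S in I2 *; rewrite /kidx /= in w3; nia.
have Hk : 0 < C' (sA (kidx i j)).
  by apply: leq_trans (Hge _); rewrite /= eqAA eqxx.
case: Ht' => [Et'|hr]; last by right; exists (kidx i j).
case: I3 => [->|[l [hl hC]]]; first by left; rewrite Et'.
right; case: (boolP ((l == i) || (l == j))) => hlij.
  exists (kidx i j); split=> //=; apply: red_ge.
  by case/orP: hlij => /eqP <-; lia.
exists l; split=> //; apply: leq_trans hC (Hge0 _ _).
by rewrite /= !eqAA; case/norP: hlij => /negbTE -> /negbTE ->.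
Qed.

Lemma reach_inv x (C C' : config Net) : reach C C' -> Inv x C -> Inv x C'.
Proof. elim=> // A0 B0 D0 H _ IH h; apply: IH; exact: step_inv H h. Qed.

Lemma sum_pos (Pr : pred 'I_K) (F : 'I_K -> nat) :
  0 < \sum_(i | Pr i) F i -> exists i, Pr i /\ 0 < F i.
Proof.
case: (pickP (fun i => Pr i && (0 < F i))) => [i /andP[? ?]|H]; first by exists i.
rewrite big1 // => i Pi; by move/negbT: (H i); rewrite Pi /= -leqNgt leqn0 => /eqP.
Qed.

Lemma B_sum (C : cfg) : B C = \sum_(i < K) C (sA i).
Proof. by rewrite /B /W !muln0 !add0n; apply: eq_bigr => i _; rewrite muln1. Qed.

Lemma pair_ex (C : cfg) : 2 <= B C -> exists i j, forall s, (rM i j).1 s <= C s.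
Proof.
rewrite B_sum => h2.
have [i [_ Hi]] := sum_pos (ltnW h2).
case: (leqP 2 (C (sA i))) => hi.
  exists i, i => [[[l|]|]] //=; rewrite eqAA; case: eqP => [->|] //=.
have hi1 : C (sA i) = 1 by lia.
move: h2; rewrite (bigD1 i) //= hi1 => h.
have hpos : 0 < \sum_(l < K | l != i) C (sA l) by rewrite -(ltn_add2l 1); exact: h.
have [j [hj Hj]] := sum_pos hpos.
exists i, j => [[[l|]|]] //=; rewrite !eqAA.
case: (eqVneq l i) => [->|hli].
  by rewrite eq_sym (negbTE hj) -/(sA i) hi1.
by rewrite /=; case: eqP => [->|] //=.
Qed.

Lemma step_lin (C C' : config Net) r : List.In r reacts -> (forall s, r.1 s <= C s) ->
  C' = (fun s => C s - r.1 s + r.2 s) -> step C C' /\ forall s, C' s + r.1 s = C s + r.2 s.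
Proof.
move=> Hr Hle ->; split; first by exists r.
by move=> s; have := Hle s; lia.
Qed.

Lemma term : forall m (C : config Net), 2 * C sX + B C <= m ->
  exists O, reach C O /\ O sX = 0 /\ B O <= 1.
Proof.
elim=> [|m IH] C hm.
  by exists C; split; [exact: reach_refl | lia].
case: (posnP (C sX)) => hX.
  case: (leqP (B C) 1) => hB; first by exists C; split; [exact: reach_refl|split].
  have [i [j Hij]] := pair_ex hB.
  pose C' : config Net := fun s => C s - (rM i j).1 s + (rM i j).2 s.
  have [Hst Hl] := step_lin (C' := C') (rM_In i j) Hij erefl.
  have w := W_lin 0 0 (fun _ => 1) Hl.
  rewrite !W_rM1 !W_rM2 -/B in w.
  have hX' : C' sX = 0 by rewrite /C' /=; lia.
  have [O [HO HO']] := IH C' ltac:(lia).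
  by exists O; split=> //; apply: reach_step Hst HO.
have Hle : forall s, rX.1 s <= C s by move=> s /=; case: eqP => [->|]; lia.
pose C' : config Net := fun s => C s - rX.1 s + rX.2 s.
have [Hst Hl] := step_lin (C' := C') (or_introl erefl : List.In rX reacts) Hle erefl.
have w := W_lin 0 0 (fun _ => 1) Hl.
rewrite !W_rX1 !W_rX2 -/B in w.
have hX' := Hl sX; rewrite /= in hX'.
have [O [HO HO']] := IH C' ltac:(lia).
by exists O; split=> //; apply: reach_step Hst HO.
Qed.

Lemma no_step (O C2 : config Net) : O sX = 0 -> B O <= 1 -> ~ step O C2.
Proof.
move=> hX hB [r [Hr [Hle _]]].
case: (In_reacts Hr) => [Er|[i [j Er]]]; subst r.
  by have := Hle sX; rewrite /= hX.
have := W_le 0 0 (fun _ => 1) Hle; rewrite W_rM1 -/B; lia.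
Qed.

Lemma final_stable (O : config Net) : O sX = 0 -> B O <= 1 -> @stable Net sY O.
Proof.
move=> hX hB C' H.
inversion H as [|C1 C2 C3 Hst Hr]; first by [].
by exfalso; apply: (no_step hX hB Hst).
Qed.

Lemma f0 : f 0 = 0. Proof. by have := Hs 0 0; rewrite addn0; lia. Qed.

Lemma final_val x (O : config Net) : Inv x O -> O sX = 0 -> B O <= 1 -> O sY = f x.
Proof.
move=> [I1 [t [I2 I3]]] hX; rewrite B_sum.
set F := fun l => O (sA l).
have Hw : forall (w : 'I_K -> nat) a b, W a b w O = O sY * b + \sum_(l < K) F l * w l.
  by move=> w a b; rewrite /W hX.
rewrite /W1 /W2 !Hw in I1; rewrite /S Hw in I2.
rewrite leq_eqVlt ltnS leqn0 => /orP[/eqP h1|/eqP h0].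
  have [k [_ Hk]] := sum_pos (F := F) (Pr := predT) ltac:(by rewrite h1).
  have Hz : forall l, l != k -> F l = 0.
    move=> l hl; apply/eqP; rewrite -leqn0; move: h1.
    rewrite (bigD1 k) // (bigD1 l) /=; last by rewrite hl.
    by move: Hk; rewrite /F; lia.
  have Hs1 : forall w : 'I_K -> nat, \sum_(l < K) F l * w l = F k * w k.
    move=> w; rewrite (bigD1 k) //= big1 => [|l hl]; first by rewrite addn0.
    by rewrite Hz // mul0n.
  have Fk : F k = 1.
    move: h1; rewrite (bigD1 k) //= big1 => [|l hl]; first by rewrite addn0.
    exact: Hz hl.
  rewrite !Hs1 Fk in I1 I2.
  case: I3 => [ht|[l [hl hC]]].
    rewrite ht mul0n addn0 muln0 mul1n add0n in I2; subst x.
    have : P * O sY = P * f k by rewrite /= in I1; nia.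
    by move/eqP; rewrite eqn_pmul2l // => /eqP.
  have hlk : l = k by apply/eqP; apply: contraTT hC => /Hz; rewrite /F => ->.
  subst l.
  rewrite /= !mul1n !muln0 !add0n in I1 I2.
  have Ef : f x = f k + t * q by rewrite I2 EPi.
  have : P * O sY = P * f x by rewrite Ef; nia.
  by move/eqP; rewrite eqn_pmul2l // => /eqP.
have Hz : forall l, F l = 0.
  move=> l; rewrite /F; apply/eqP; rewrite -leqn0; move: h0.
  by rewrite (bigD1 l) //=; lia.
have Hs0 : forall w : 'I_K -> nat, \sum_(l < K) F l * w l = 0.
  by move=> w; rewrite big1 // => l _; rewrite Hz.
rewrite !Hs0 in I1 I2.
case: I3 => [ht|[l [_ hC]]]; last by move: hC; rewrite -/(F l) Hz.
rewrite ht mul0n muln0 !addn0 in I2; subst x.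
rewrite f0; nia.
Qed.

Lemma constr_ok : obliviously_computable f.
Proof.
exists Net, sX, sY; split.
  move=> r /In_reacts [->|[i [j ->]]] //=.
move=> x C HC.
have Hinit : Inv x (@init_config Net sX x).
  rewrite /Inv /W1 /W2 /S /W /init_config /=.
  have e : forall w : 'I_K -> nat, \sum_(i < K) (if sA i == sX then x else 0) * w i = 0.
    by move=> w; rewrite big1 // => i _; rewrite eqAX.
  rewrite !e; split; first by nia.
  by exists 0; split; [nia | left].
have [O [HO [hX hB]]] := @term _ C (leqnn _).
exists O; split=> //; split; first exact: final_stable.
apply: final_val => //.
exact: reach_inv (reach_trans HC HO) Hinit.
Qed.
End Constr.

Theorem theorem39 (f : nat -> nat) :
  obliviously_computable f <-> semilinear_fun f /\ superadditive f.
Proof.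
split.
  move=> [N [X [Y [Ho Hc]]]].
  split; last exact: comp_sa Hc.
  apply: EP_semilinear.
  exact: comp_ep Ho Hc.
move=> [Hsl Hsa].
have [N0 [P [q [HP H]]]] := sf_ep Hsl Hsa.
exact: constr_ok HP Hsa H.
Qed.
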